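(* Let $T = \{t_1,\dots,t_n\}$ be a set of finite traces over $\Sigma = 2^{\mathrm{AP}}$ and let $\varphi = \forall\pi_1\dots\forall\pi_{k_T}.\ \psi$ be a universally-safe HyperLTL formula. Then $T$ is a bad prefix of $\varphi$ (i.e., $T \in \mathrm{Bad}(\mathcal{L}(\varphi))$) if and only if the HyperLTL formula $$\varphi' := \exists\pi'_1\dots\exists\pi'_n\ \forall\pi_1\dots\forall\pi_{k_T}.\ \pi'_1 \ge t_1 \wedge \dots \wedge \pi'_n \ge t_n \wedge \psi$$ is unsatisfiable.
   Context: HyperLTL formulas over a set of atomic propositions AP are generated by $\psi ::= \exists\pi.\psi \mid \forall\pi.\psi \mid \phi$, $\phi ::= a_\pi \mid \neg\phi \mid \phi\vee\phi \mid \bigcirc\phi \mid \phi\,\mathcal{U}\,\phi$. For $T \subseteq \Sigma^\omega$ and a trace assignment $\Pi$: $\Pi \models_T \exists\pi.\psi$ iff some $t \in T$ has $\Pi[\pi\mapsto t]\models_T\psi$; $\forall$ dually; $\Pi\models_T a_\pi$ iff $a \in \Pi(\pi)[0]$; Boolean connectives as usual; $\Pi\models_T\bigcirc\phi$ iff $\Pi[1,\infty]\models_T\phi$; $\Pi\models_T\phi_1\mathcal{U}\phi_2$ iff $\exists i\ge0$ with $\Pi[i,\infty]\models_T\phi_2$ and $\Pi[j,\infty]\models_T\phi_1$ for all $j<i$. $T$ satisfies $\varphi$ if the empty assignment satisfies it; $\mathcal{L}(\varphi) = \{T \subseteq \Sigma^\omega \mid T \text{ satisfies } \varphi\}$; a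 formula is satisfiable if some (nonempty) set of traces satisfies it. A universally-safe HyperLTL formula has the form $\forall\pi_1\dots\forall\pi_k.\psi$ with $\psi$ a quantifier-free safety formula. For a trace variable $\pi'$ and finite trace $t = t[0]\cdots t[m-1]$, $\pi' \ge t$ abbreviates the quantifier-free formula $\bigwedge_{j<m}\bigcirc^j\big(\bigwedge_{a\in t[j]} a_{\pi'} \wedge \bigwedge_{a \notin t[j]} \neg a_{\pi'}\big)$, stating that $t$ is a prefix of the trace bound to $\pi'$. For finite $T \subseteq \Sigma^*$ and $T' \subseteq \Sigma^\omega$, $T \le T'$ means every $t \in T$ is a prefix of some $t' \in T'$; $\mathrm{Bad}(\mathbf{S}) = \{T \text{ finite} \mid \forall T'.\ T \le T' \Rightarrow T' \notin \mathbf{S}\}$. *)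

(* Defs.v *)
From mathcomp Require Import all_boot.
Set Implicit Arguments. Unset Strict Implicit. Unset Printing Implicit Defensive.

Section HyperLTL.
Variable AP : finType.

Definition letter := {set AP}.
Definition trace := nat -> letter.
Definition ftrace := seq letter.

Definition tvar := nat.

Inductive qf :=
| QAtom of AP & tvar
| QNeg of qf
| QOr of qf & qf
| QNext of qf
| QUntil of qf & qf.

Inductive hform :=
| HEx of tvar & hform
| HAll of tvar & hform
| HQF of qf.

Definition assignment := tvar -> option trace.
Definition empty_assignment : assignment := fun _ => None.
Definition upd (Pi : assignment) (x : tvar) (t : trace) : assignment :=
  fun y => if y == x then Some t else Pi y.
Definition shift (i : nat) (Pi : assignment) : assignment :=
  fun y => omap (fun t : trace => fun n => t (i + n)) (Pi y).

Fixpoint qsat (Pi : assignment) (f : qf) : Prop :=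
  match f with
  | QAtom a x => exists t, Pi x = Some t /\ a \in t 0
  | QNeg g => ~ qsat Pi g
  | QOr g h => qsat Pi g \/ qsat Pi h
  | QNext g => qsat (shift 1 Pi) g
  | QUntil g h => exists i, qsat (shift i Pi) h /\
                   forall j, j < i -> qsat (shift j Pi) g
  end.

Definition tset := trace -> Prop.

Fixpoint hsat (T : tset) (Pi : assignment) (f : hform) : Prop :=
  match f with
  | HEx x g => exists t, T t /\ hsat T (upd Pi x t) g
  | HAll x g => forall t, T t -> hsat T (upd Pi x t) g
  | HQF g => qsat Pi g
  end.

Definition satisfies (T : tset) (f : hform) : Prop := hsat T empty_assignment f.
Definition lang (f : hform) : tset -> Prop := fun T => satisfies T f.
Definition satisfiable (f : hform) : Prop :=
  exists T : tset, (exists t, T t) /\ satisfies T f.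

Definition QAnd (f g : qf) : qf := QNeg (QOr (QNeg f) (QNeg g)).

Fixpoint vars_lt (k : nat) (f : qf) : bool :=
  match f with
  | QAtom _ x => x < k
  | QNeg g | QNext g => vars_lt k g
  | QOr g h | QUntil g h => vars_lt k g && vars_lt k h
  end.

Definition env (k : nat) (w : nat -> trace) : assignment :=
  fun x => if x < k then Some (w x) else None.

Definition safety_qf (k : nat) (psi : qf) : Prop :=
  forall w : nat -> trace, ~ qsat (env k w) psi ->
    exists i, forall w' : nat -> trace,
      (forall x, x < k -> forall j, j < i -> w' x j = w x j) ->
      ~ qsat (env k w') psi.

(* forall pi_1 ... forall pi_k. psi, with pi_j := j-1 *)
Definition univ_formula (k : nat) (psi : qf) : hform :=
  foldr HAll (HQF psi) (iota 0 k).

Definition universally_safe (k : nat) (psi : qf) : Prop :=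
  vars_lt k psi /\ safety_qf k psi.

Definition is_prefix (t : ftrace) (t' : trace) : Prop :=
  forall j, j < size t -> nth set0 t j = t' j.
Definition fle (T : seq ftrace) (T' : tset) : Prop :=
  forall t, t \in T -> exists t', T' t' /\ is_prefix t t'.
Definition Bad (S : tset -> Prop) (T : seq ftrace) : Prop :=
  forall T' : tset, fle T T' -> ~ S T'.

(* pi' >= t : the list of conjuncts  X^j (a_pi')  /  X^j (~ a_pi')
   for j < |t| and a in AP *)
Definition lit (x : tvar) (l : letter) (a : AP) : qf :=
  if a \in l then QAtom a x else QNeg (QAtom a x).
Definition prefix_conjuncts (x : tvar) (t : ftrace) : seq qf :=
  flatten [seq [seq iter j QNext (lit x (nth set0 t j) a) | a <- enum AP]
          | j <- iota 0 (size t)].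

(* phi' := exists pi'_1..pi'_n forall pi_1..pi_k.
             pi'_1 >= t_1 /\ ... /\ pi'_n >= t_n /\ psi
   with pi_j := j-1 and pi'_i := k + (i-1). *)
Definition phi_prime (k : nat) (ts : seq ftrace) (psi : qf) : hform :=
  let body := foldr QAnd psi
      (flatten [seq prefix_conjuncts (k + i) (nth [::] ts i)
               | i <- iota 0 (size ts)]) in
  foldr HEx (foldr HAll (HQF body) (iota 0 k)) (iota k (size ts)).

End HyperLTL.

(* Main.v *)
From Stdlib Require Import FunctionalExtensionality Classical IndefiniteDescription.
Require Import Defs.
From mathcomp Require Import all_boot.
From mathcomp Require Import zify.
Set Implicit Arguments. Unset Strict Implicit. Unset Printing Implicit Defensive.

Section S.
Variable AP : finType.

Definition updn (Pi : assignment AP) a m (w : nat -> trace AP) : assignment AP :=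
  fun y => if (a <= y) && (y < a + m) then Some (w y) else Pi y.

Lemma updn0 Pi a w : updn Pi a 0 w = Pi.
Proof. apply: functional_extensionality => y; rewrite /updn; case: ifP => //; lia. Qed.

Lemma updnS Pi a m t w : updn (upd Pi a t) a.+1 m w =
  updn Pi a m.+1 (fun z => if z == a then t else w z).
Proof.
apply: functional_extensionality => y; rewrite /updn /upd.
case: (eqVneq y a) => [->|ne].
  rewrite ltnn /=; case: ifP => //; lia.
rewrite ?ne; case: ifP; case: ifP => //; lia.
Qed.

Lemma hsat_all T Pi f a m : hsat T Pi (foldr (@HAll AP) f (iota a m)) <->
  forall w, (forall x, a <= x < a + m -> T (w x)) -> hsat T (updn Pi a m w) f.
Proof.
elim: m a Pi => [|m IH] a Pi /=.
  split=> [H w _|H]; rewrite ?updn0 //. have := H (fun _ _ => set0); rewrite updn0; apply => x; lia.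
split.
- move=> H w Hw.
  have Ha : T (w a) by apply: Hw; lia.
  have := (proj1 (IH a.+1 (upd Pi a (w a))) (H _ Ha) w).
  rewrite updnS.
  have -> : (fun z => if z == a then w a else w z) = w.
    by apply: functional_extensionality => z; case: eqP => [->|].
  apply=> x Hx; apply: Hw; lia.
- move=> H t Ht; apply/IH => w Hw; rewrite updnS; apply: H => x Hx.
  case: (eqVneq x a) => [_|ne] //; apply: Hw; move: ne; lia.
Qed.

Lemma hsat_ex T Pi f a m : hsat T Pi (foldr (@HEx AP) f (iota a m)) <->
  exists w, (forall x, a <= x < a + m -> T (w x)) /\ hsat T (updn Pi a m w) f.
Proof.
elim: m a Pi => [|m IH] a Pi /=.
  split=> [H|[w [_ H]]]; last by rewrite updn0 in H.
  by exists (fun _ _ => set0); rewrite updn0; split => // x; lia.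
split.
- move=> [t [Ht H]]; have [w [Hw H2]] := proj1 (IH _ _) H.
  rewrite updnS in H2; eexists; split; last exact: H2.
  move=> x Hx /=; case: (eqVneq x a) => [_|ne] //; apply: Hw; move: ne; lia.
- move=> [w [Hw H]].
  have Ha : T (w a) by apply: Hw; lia.
  exists (w a); split => //; apply/IH; exists w; split.
    move=> x Hx; apply: Hw; lia.
  rewrite updnS.
  have -> : (fun z => if z == a then w a else w z) = w.
    by apply: functional_extensionality => z; case: eqP => [->|].
  by [].
Qed.

Fixpoint allq (P : qf AP -> Prop) (l : seq (qf AP)) : Prop :=
  if l is c :: l' then P c /\ allq P l' else True.

Lemma allq_cat P l1 l2 : allq P (l1 ++ l2) <-> allq P l1 /\ allq P l2.
Proof. elim: l1 => [|c l IH] /=; first by intuition. rewrite IH; tauto. Qed.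

Lemma allq_flatten (X : eqType) P (g : X -> seq (qf AP)) s :
  allq P (flatten [seq g x | x <- s]) <-> forall x, x \in s -> allq P (g x).
Proof.
elim: s => [|y s IH] /=; first by split.
rewrite allq_cat IH; split.
  move=> [H1 H2] x; rewrite inE; case/orP => [/eqP->|]; auto.
move=> H; split; first by apply: H; rewrite inE eqxx.
by move=> x Hx; apply: H; rewrite inE Hx orbT.
Qed.

Lemma allq_map (X : eqType) P (g : X -> qf AP) s :
  allq P [seq g x | x <- s] <-> forall x, x \in s -> P (g x).
Proof.
elim: s => [|y s IH] /=; first by split.
rewrite IH; split.
  move=> [H1 H2] x; rewrite inE; case/orP => [/eqP->|]; auto.
move=> H; split; first by apply: H; rewrite inE eqxx.
by move=> x Hx; apply: H; rewrite inE Hx orbT.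
Qed.

Lemma qsat_and (Pi : assignment AP) (f g : qf AP) : qsat Pi (QAnd f g) <-> qsat Pi f /\ qsat Pi g.
Proof. rewrite /QAnd /=; tauto. Qed.

Lemma qsat_foldr (Pi : assignment AP) psi l : qsat Pi (foldr (@QAnd AP) psi l) <->
  allq (qsat Pi) l /\ qsat Pi psi.
Proof. elim: l => [|c l IH]; first by simpl; tauto.
change (qsat Pi (QAnd c (foldr (@QAnd AP) psi l)) <-> (qsat Pi c /\ allq (qsat Pi) l) /\ qsat Pi psi).
rewrite qsat_and IH; tauto. Qed.

Lemma shift_shift i j (Pi : assignment AP) : shift i (shift j Pi) = shift (j + i) Pi.
Proof.
apply: functional_extensionality => y; rewrite /shift; case: (Pi y) => //= t.
congr Some; apply: functional_extensionality => n; congr t; lia.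
Qed.

Lemma qsat_iter (Pi : assignment AP) j g : qsat Pi (iter j (@QNext AP) g) <-> qsat (shift j Pi) g.
Proof.
elim: j Pi => [|j IH] Pi /=.
  have -> : shift 0 Pi = Pi.
    apply: functional_extensionality => y; rewrite /shift; case: (Pi y) => //= t.
  tauto.
by apply: iff_trans (IH _) _; rewrite shift_shift add1n.
Qed.

Lemma prefix_ok (Pi : assignment AP) x t t' : Pi x = Some t' ->
  (allq (qsat Pi) (prefix_conjuncts x t) <-> is_prefix t t').
Proof.
move=> Hx; rewrite /prefix_conjuncts allq_flatten; split.
- move=> H j Hj; apply/setP => a.
  have := proj1 (allq_map _ _ _) (H j _) a; rewrite mem_iota /= add0n => /(_ Hj).
  move/(_ (mem_enum _ a)); rewrite qsat_iter /lit.
  case: ifP => Ha /=; rewrite /shift Hx /=.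
    by move=> [u [[<-]]]; rewrite addn0.
  move=> Hn; apply/esym/negbTE/negP => Hin; apply: Hn; eexists; split; first by [].
  by rewrite /= addn0.
- move=> H j; rewrite mem_iota add0n => /andP[_ Hj]; apply/allq_map => a _.
  rewrite qsat_iter /lit.
  case: ifP => Ha /=; rewrite /shift Hx /=.
    by eexists; split; first by []; rewrite /= addn0 -(H j Hj).
  by move=> [u [[<-]]]; rewrite /= addn0 -(H j Hj) Ha.
Qed.

Lemma qsat_agree k (f : qf AP) (Pi1 Pi2 : assignment AP) : vars_lt k f ->
  (forall x, x < k -> Pi1 x = Pi2 x) -> (qsat Pi1 f <-> qsat Pi2 f).
Proof.
elim: f Pi1 Pi2 => [a x|g IH|g IHg h IHh|g IH|g IHg h IHh] Pi1 Pi2 /=.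
- by move=> Hx H; rewrite H.
- by move=> Hv H; rewrite (IH _ _ Hv H).
- by move=> /andP[H1 H2] H; rewrite (IHg _ _ H1 H) (IHh _ _ H2 H).
- move=> Hv H; apply: IH => // y Hy; by rewrite /shift H.
- move=> /andP[H1 H2] H.
  have Hs i : forall x, x < k -> shift i Pi1 x = shift i Pi2 x by move=> y Hy; rewrite /shift H.
  split; move=> [i [Hi Hj]]; exists i; split.
  + by apply/(IHh _ _ H2 (Hs i)).
  + by move=> j Hj'; apply/(IHg _ _ H1 (Hs j)); apply: Hj.
  + by apply/(IHh _ _ H2 (Hs i)).
  + by move=> j Hj'; apply/(IHg _ _ H1 (Hs j)); apply: Hj.
Qed.

End S.

Theorem theorem9 (AP : finType) (ts : seq (ftrace AP)) (k : nat) (psi : qf AP) :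
  0 < size ts ->
  universally_safe k psi ->
  (Bad (lang (univ_formula k psi)) ts <-> ~ satisfiable (phi_prime k ts psi)).
Proof.
move=> Hn [Hv _].
set n := size ts.
have Hbody : forall (T : tset AP) w' w,
   qsat (updn (updn (@empty_assignment AP) k n w') 0 k w)
     (foldr (@QAnd AP) psi (flatten [seq prefix_conjuncts (k + i) (nth [::] ts i)
               | i <- iota 0 n])) <->
   (forall i, i < n -> is_prefix (nth [::] ts i) (w' (k + i))) /\
   qsat (updn (@empty_assignment AP) 0 k w) psi.
  move=> T w' w; rewrite qsat_foldr allq_flatten.
  have Hag : qsat (updn (updn (@empty_assignment AP) k n w') 0 k w) psi <->
             qsat (updn (@empty_assignment AP) 0 k w) psi.
    apply: (qsat_agree Hv) => x Hx; by rewrite /updn Hx.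
  have Hx : forall i, i < n -> updn (updn (@empty_assignment AP) k n w') 0 k w (k + i) = Some (w' (k + i)).
    move=> i Hi; rewrite /updn; case: ifP => [|_]; first lia.
    by case: ifP => //; lia.
  rewrite Hag; split => [[H1 H2]|[H1 H2]]; split => //.
    move=> i Hi; have := H1 i; rewrite mem_iota add0n => /(_ Hi).
    by move/(prefix_ok _ (Hx i Hi)).
  move=> i; rewrite mem_iota add0n => /andP[_ Hi].
  by apply/(prefix_ok _ (Hx i Hi)); exact: (H1 i Hi).
rewrite /Bad /satisfiable /lang /satisfies /phi_prime /univ_formula.
split.
- move=> HB [T [[t0 Ht0] Hs]].
  have [w' [Hw' H]] := proj1 (hsat_ex _ _ _ _ _) Hs.
  have H' := proj1 (hsat_all _ _ _ _ _) H.
  apply: (HB T).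
    move=> t Ht; have Hi : index t ts < n by rewrite index_mem.
    exists (w' (k + index t ts)); split.
      by apply: Hw'; move: Hi; rewrite /n; lia.
    have := proj1 (proj1 (Hbody T w' (fun _ => t0)) (H' _ (fun _ _ => Ht0))) _ Hi.
    by rewrite nth_index.
  apply/hsat_all => w Hw.
  exact: (proj2 (proj1 (Hbody T w' w) (H' w Hw))).
- move=> HnS T Hfle Hs; apply: HnS.
  have [t0 [Ht0 _]] := Hfle _ (mem_nth [::] Hn).
  have Hex : forall i, exists t', T t' /\ (i < n -> is_prefix (nth [::] ts i) t').
    move=> i; case: (ltnP i n) => Hi.
      have [t' [Ht' Hp]] := Hfle _ (mem_nth [::] Hi); by exists t'.
    by exists t0; split => //; lia.
  have [f Hf] := functional_choice _ Hex.
  exists T; split; first by exists t0.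
  apply/hsat_ex; exists (fun x => f (x - k)); split.
    by move=> x _; case: (Hf (x - k)).
  apply/hsat_all => w Hw /=; apply/(Hbody T); split.
    by move=> i Hi; have := proj2 (Hf i) Hi; rewrite addKn.
  exact: (proj1 (hsat_all _ _ _ _ _) Hs w Hw).
Qed.
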